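(* Let $u_1,\dots,u_m\in\mathbb{R}^d$ and let $F_i(x)=\frac12\|x-u_i\|^2$, so $F(x)=\frac1m\sum_{i=1}^m F_i(x)$ has unique minimizer $x^\star=\frac1m\sum_i u_i$. Run FedAvg (as described in the context) with exact local gradients, initial point $x^0=0$, constant learning rate $\eta\in(0,1)$, $s\ge1$ local steps, and time-invariant link probabilities $p_i^t=p_i\in(0,1]$ for all $t$. Then $$\lim_{T\to\infty}\mathbb{E}[x^T]=\sum_{i=1}^m\frac{p_i u_i\left[1+\sum_{j=2}^m(-1)^{j+1}\frac1j\sum_{S\in\mathcal{B}^i_j}\prod_{z\in S}p_z\right]}{1-\prod_{l=1}^m(1-p_l)},$$ where $\mathcal{B}^i_j=\{S\subseteq[m]\setminus\{i\}:\ |S|=j-1\}$.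
   Context: FedAvg with unreliable uplinks: there are $m$ clients and a server holding $x^t$. In each round $t$, client $i$'s uplink is active with probability $p_i^t$, independently across clients and rounds; $\mathcal{A}^t$ is the set of clients with active uplinks. Each client starts from the current server model $x^t$ and performs $s$ steps of gradient descent with exact gradients, $y_{k+1}=y_k-\eta\nabla F_i(y_k)$, $y_0=x^t$, obtaining $y_s^{(i)}$. If $\mathcal{A}^t\neq\emptyset$ the server sets $x^{t+1}=\frac{1}{|\mathcal{A}^t|}\sum_{i\in\mathcal{A}^t}y_s^{(i)}$; otherwise $x^{t+1}=x^t$. *)

(* Defs.v *)
From HB Require Import structures.
From mathcomp Require Import all_boot all_order all_algebra.
From mathcomp Require Import all_classical all_reals all_analysis.
Set Implicit Arguments. Unset Strict Implicit. Unset Printing Implicit Defensive.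
Import Order.TTheory GRing.Theory Num.Theory.
Local Open Scope ring_scope.

Section FedAvg.
Variables (R : realType) (m d : nat).

Definition Fi (u : 'I_m -> 'rV[R]_d) (i : 'I_m) (x : 'rV[R]_d) : R :=
  2^-1 * \sum_(k < d) (x 0 k - u i 0 k) ^+ 2.

Definition gradFi (u : 'I_m -> 'rV[R]_d) (i : 'I_m) (x : 'rV[R]_d) : 'rV[R]_d :=
  x - u i.

Definition local_gd (u : 'I_m -> 'rV[R]_d) (eta : R) (s : nat) (i : 'I_m)
  (x : 'rV[R]_d) : 'rV[R]_d :=
  iter s (fun y => y - eta *: gradFi u i y) x.

Definition fedavg_step (u : 'I_m -> 'rV[R]_d) (eta : R) (s : nat)
  (A : {set 'I_m}) (x : 'rV[R]_d) : 'rV[R]_d :=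
  if A == finset.set0 then x
  else (#|A|%:R)^-1 *: \sum_(i in A) local_gd u eta s i x.

Definition fedavg_run (u : 'I_m -> 'rV[R]_d) (eta : R) (s : nat)
  (As : seq {set 'I_m}) (x0 : 'rV[R]_d) : 'rV[R]_d :=
  foldl (fun x A => fedavg_step u eta s A x) x0 As.

(* Probability that the active set equals A when client i is active with
   probability p i, independently across clients. *)
Definition active_prob (p : 'I_m -> R) (A : {set 'I_m}) : R :=
  (\prod_(i in A) p i) * \prod_(i in ~: A) (1 - p i).

(* E[x^T]: expectation over the T independent rounds (time-invariant p). *)
Definition expected_iterate (u : 'I_m -> 'rV[R]_d) (eta : R) (s : nat)
  (p : 'I_m -> R) (x0 : 'rV[R]_d) (T : nat) : 'rV[R]_d :=
  \sum_(As : T.-tuple {set 'I_m})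
     (\prod_(A <- As) active_prob p A) *: fedavg_run u eta s As x0.

Definition fedavg_limit (u : 'I_m -> 'rV[R]_d) (p : 'I_m -> R) : 'rV[R]_d :=
  \sum_(i < m)
    ((p i * (1 + \sum_(2 <= j < m.+1)
         (-1) ^+ j.+1 * (j%:R)^-1 *
         \sum_(S : {set 'I_m} | (i \notin S) && (#|S| == j.-1)%N)
            \prod_(z in S) p z))
     / (1 - \prod_(l < m) (1 - p l))) *: u i.

End FedAvg.

(* Main.v *)
Require Import Defs.
From HB Require Import structures.
From mathcomp Require Import all_boot all_order all_algebra.
From mathcomp Require Import all_classical all_reals all_analysis.
From mathcomp Require Import ring lra.
Import Order.TTheory GRing.Theory Num.Theory numFieldNormedType.Exports.
Local Open Scope ring_scope.

Section Comb.
Variables (R : realType) (T : finType) (p : T -> R).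

Definition Dl (h : nat -> R) : nat -> R := fun k => h k.+1 - h k.

Definition LS (X : {set T}) (h : nat -> R) : R :=
  \sum_(S : {set T} | S \subset X)
     ((\prod_(k in S) p k) * (\prod_(k in X :\: S) (1 - p k))) * h #|S|.
Definition RS (X : {set T}) (h : nat -> R) : R :=
  \sum_(S : {set T} | S \subset X) (\prod_(k in S) p k) * iter #|S| Dl h 0%N.

Lemma sum_subU1 (a : T) (Y : {set T}) (F : {set T} -> R) : a \notin Y ->
  \sum_(S : {set T} | S \subset a |: Y) F S =
  \sum_(S : {set T} | S \subset Y) F S + \sum_(S : {set T} | S \subset Y) F (a |: S).
Proof.
move=> aY.
rewrite (bigID (fun S : {set T} => a \in S)) /= addrC; congr (_ + _).
  apply: eq_bigl => S; apply/andP/idP.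
    case=> hsub aS; apply/fintype.subsetP => x xS.
    have := fintype.subsetP hsub x xS; rewrite in_setU1 => /orP[/eqP xa|//].
    by rewrite -xa xS in aS.
  move=> hsub; split; first by apply: (fintype.subset_trans hsub); exact: subsetU1.
  by apply/negP => aS; move: (fintype.subsetP hsub a aS); rewrite (negbTE aY).
rewrite (reindex_onto (fun S : {set T} => a |: S) (fun S : {set T} => S :\ a)) /=; last first.
  by move=> S /andP[_ aS]; rewrite finset.setD1K.
apply: eq_bigl => S.
case: (boolP (a \in S)) => aS.
  have -> : ((a |: S) :\ a == S) = false.
    apply/negP => /eqP e; move: aS; rewrite -e; by rewrite setD11.
  rewrite andbF; apply/esym/negP => hsub; move: (fintype.subsetP hsub a aS); by rewrite (negbTE aY).
rewrite setU1K // eqxx setU11 andbT.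
rewrite finset.subUset finset.sub1set setU11 /=.
rewrite andbT.
apply/idP/idP => hsub; apply/fintype.subsetP => x xS.
  have := fintype.subsetP hsub x xS; rewrite in_setU1 => /orP[/eqP xa|//].
  by rewrite -xa xS in aS.
by rewrite in_setU1 (fintype.subsetP hsub x xS) orbT.
Qed.


Lemma LS_step (a : T) (Y : {set T}) h : a \notin Y ->
  LS (a |: Y) h = (1 - p a) * LS Y h + p a * LS Y (fun k => h k.+1).
Proof.
move=> aY; rewrite /LS sum_subU1 // !mulr_sumr; congr (_ + _); apply: eq_bigr => S hS.
  have aS : a \notin S by apply/negP => aS; move: (fintype.subsetP hS a aS); rewrite (negbTE aY).
  have -> : (a |: Y) :\: S = a |: (Y :\: S).
    apply/setP => x; rewrite !inE; case: (eqVneq x a) => [->|] //=.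
    by rewrite (negbTE aS).
  rewrite big_setU1 /=; last by rewrite !inE (negbTE aY) andbF.
  by rewrite mulrA [_ * (1 - p a)]mulrC -!mulrA.
have aS : a \notin S by apply/negP => aS; move: (fintype.subsetP hS a aS); rewrite (negbTE aY).
have -> : (a |: Y) :\: (a |: S) = Y :\: S.
  apply/setP => x; rewrite !inE; case: (eqVneq x a) => [->|] //=.
  by rewrite (negbTE aY) andbF.
rewrite big_setU1 //= cardsU1 aS /= add1n.
by rewrite -!mulrA.
Qed.

Lemma LS_Dl Y h : LS Y (Dl h) = LS Y (fun k => h k.+1) - LS Y h.
Proof. by rewrite /LS -sumrB; apply: eq_bigr => S _; rewrite /Dl mulrBr. Qed.

Lemma RS_step (a : T) (Y : {set T}) h : a \notin Y ->
  RS (a |: Y) h = RS Y h + p a * RS Y (Dl h).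
Proof.
move=> aY; rewrite /RS sum_subU1 // mulr_sumr; congr (_ + _); apply: eq_bigr => S hS.
have aS : a \notin S by apply/negP => aS; move: (fintype.subsetP hS a aS); rewrite (negbTE aY).
by rewrite big_setU1 //= cardsU1 aS /= ?add0n ?add1n -iterS iterSr mulrA.

Qed.

Lemma LS_RS X h : LS X h = RS X h.
Proof.
move: {2}#|X| (erefl #|X|) => n; elim: n X h => [|n IH] X h cX.
  move/eqP: cX; rewrite cards_eq0 => /eqP ->.
  rewrite /LS /RS !(big_pred1 finset.set0); last first.
    by move=> S; rewrite /= finset.subset0.
    by move=> S; rewrite /= finset.subset0.
  by rewrite !big_set0 cards0 finset.setD0 big_set0 /= !mul1r.
have : (0 < #|X|)%N by rewrite cX.
rewrite card_gt0 => /set0Pn [a aX].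
have XE : X = a |: (X :\ a) by rewrite finset.setD1K.
have aY : a \notin X :\ a by rewrite setD11.
have cY : #|X :\ a| = n by move: cX; rewrite (cardsD1 a X) aX add1n => -[].
rewrite XE LS_step // RS_step // -!IH //.
rewrite (LS_Dl (X :\ a) h). 
by ring.
Qed.

End Comb.

Lemma iter_h0 (R : realType) n k :
  iter n (@Dl R) (fun k => ((k.+1)%:R)^-1) k =
  (-1) ^+ n * (n`! * k`!)%:R / (((n + k).+1)`!)%:R.
Proof.
elim: n k => [|n IH] k.
  have hk : (k`!)%:R != 0 :> R by rewrite pnatr_eq0 -lt0n fact_gt0.
  have hk1 : (k.+1)%:R != 0 :> R by rewrite pnatr_eq0.
  rewrite /= expr0 mul1r add0n factS mul1n natrM.
  by field; rewrite hk /= paddr_eq0 ?ler0n ?ler01 // oner_eq0.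
rewrite /= /Dl !IH addnS addSn !factS !natrM.
have h1 : ((n + k).+1`!)%:R != 0 :> R by rewrite pnatr_eq0 -lt0n fact_gt0.
have h2 : ((n + k).+2)%:R != 0 :> R by rewrite pnatr_eq0.
rewrite exprS.
rewrite -addn2 -[(n + k).+1]addn1 !natrD in h2 *.
rewrite -[k.+1]addn1 -[n.+1]addn1 !natrD /=.
field.
by rewrite h2 andbT pnatr_eq0 -lt0n fact_gt0 /= paddr_eq0 ?addr_ge0 ?ler0n ?ler01 // oner_eq0 andbF.
Qed.

Lemma iter_one (R : realType) n k :
  iter n (@Dl R) (fun _ => 1) k = (n == 0%N)%:R.
Proof.
elim: n k => [|n IH] k //.
by rewrite /= /Dl !IH subrr.
Qed.

Section Fed.
Variables (R : realType) (m d : nat) (u : 'I_m -> 'rV[R]_d) (eta : R) (s : nat) (p : 'I_m -> R).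

Lemma E_rec T x : expected_iterate u eta s p x T.+1 =
  \sum_(A : {set 'I_m}) active_prob p A *: expected_iterate u eta s p (fedavg_step u eta s A x) T.
Proof.
rewrite /expected_iterate.
rewrite (reindex (fun q : {set 'I_m} * T.-tuple {set 'I_m} => [tuple of q.1 :: q.2])) /=; last first.
  exists (fun t : T.+1.-tuple {set 'I_m} => (thead t, [tuple of behead t])).
    by case=> a t _; congr pair; apply: val_inj.
  by move=> t _; rewrite [in RHS](tuple_eta t).
rewrite -(pair_bigA _ (fun (A : {set _}) (t : T.-tuple _) => (\prod_(A0 <- A :: t) active_prob p A0) *: fedavg_run u eta s t (fedavg_step u eta s A x))) /=; apply: eq_bigr => A _.
rewrite scaler_sumr; apply: eq_bigr => t _.
by rewrite big_cons scalerA.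
Qed.

Lemma E_0 x : expected_iterate u eta s p x 0 = x.
Proof.
rewrite /expected_iterate (big_pred1 [tuple]) ?big_nil ?scale1r //.
by move=> t; apply/esym/eqP; exact: tuple0.
Qed.


Lemma local_gdE i x : local_gd u eta s i x = (1-eta)^+s *: x + (1 - (1-eta)^+s) *: u i.
Proof.
rewrite /local_gd; elim: s => [|n IH] /=.
  by rewrite expr0 scale1r subrr scale0r addr0.
rewrite IH /gradFi; apply/rowP => k; rewrite !mxE exprS; ring.
Qed.

Definition cc := (1 - eta) ^+ s.
Definition avg (A : {set 'I_m}) : 'rV[R]_d := (#|A|%:R)^-1 *: \sum_(i in A) u i.

Lemma stepE (A : {set 'I_m}) x : A != finset.set0 ->
  fedavg_step u eta s A x = cc *: x + (1 - cc) *: avg A.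
Proof.
move=> hA; rewrite /fedavg_step (negbTE hA).
have hc : (#|A|%:R : R) != 0 by rewrite pnatr_eq0 cards_eq0.
under eq_bigr do rewrite local_gdE.
rewrite big_split /= sumr_const -scaler_sumr scalerDr -[(_ *: x) *+ _]scaler_nat !scalerA mulrA mulVf // mul1r.
by rewrite /cc [_^-1 * _]mulrC.
Qed.

Lemma sum_active : \sum_(A : {set 'I_m}) active_prob p A = 1.
Proof.
have := @LS_RS R _ p [set: 'I_m] (fun _ => 1).
rewrite /LS /RS.
under eq_bigl do rewrite finset.subsetT.
under [in RHS]eq_bigl do rewrite finset.subsetT.
under eq_bigr do rewrite mulr1 finset.setTD.
move=> ->.
rewrite (bigD1 finset.set0) //= big_set0 cards0 /= mul1r [X in _ + X]big1 ?addr0 //.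
by move=> S hS; rewrite iter_one; move: hS; rewrite -cards_eq0 => /negbTE ->; rewrite mulr0.
Qed.


Lemma subC1 (i : 'I_m) (S : {set 'I_m}) : (S \subset ~: [set i]) = (i \notin S).
Proof. by rewrite finset.subsetC finset.sub1set inE. Qed.

Lemma coef_LS (i : 'I_m) :
  \sum_(A : {set 'I_m} | i \in A) active_prob p A / (#|A|%:R) =
  p i * \sum_(S : {set 'I_m} | i \notin S)
          \prod_(k in S) p k * ((-1) ^+ #|S| / (#|S|.+1)%:R).
Proof.
rewrite (reindex_onto (fun S : {set 'I_m} => i |: S) (fun A : {set 'I_m} => A :\ i)) /=; last first.
  by move=> A iA; rewrite finset.setD1K.
have -> : \sum_(S : {set 'I_m} | i \notin S)
          \prod_(k in S) p k * ((-1) ^+ #|S| / (#|S|.+1)%:R) =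
          @RS R _ p (~: [set i]) (fun k => ((k.+1)%:R)^-1).
  rewrite /RS; apply: eq_big => S; first by rewrite subC1.
  move=> _; rewrite iter_h0 fact0 muln1 addn0 factS natrM.
  have hf : ((#|S|)`!)%:R != 0 :> R by rewrite pnatr_eq0 -lt0n fact_gt0.
  by congr (_ * _); field; rewrite hf /= paddr_eq0 ?ler0n ?ler01 // oner_eq0.
rewrite -LS_RS /LS mulr_sumr; apply: eq_big => S.
  rewrite setU11 /= subC1; case: (boolP (i \in S)) => iS /=.
    apply/negP => /eqP e; move: iS; by rewrite -e setD11.
  by rewrite setU1K // eqxx.
move=> /andP[_ /eqP e].
have iS : i \notin S by rewrite -e setD11.
rewrite /active_prob big_setU1 //= cardsU1 iS add1n.
have -> : ~: (i |: S) = ~: [set i] :\: S.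
  by apply/setP => x; rewrite !inE negb_or andbC.
by rewrite -!mulrA.
Qed.


Lemma regroup (i : 'I_m) :
  \sum_(S : {set 'I_m} | i \notin S) \prod_(k in S) p k * ((-1) ^+ #|S| / (#|S|.+1)%:R) =
  1 + \sum_(2 <= j < m.+1) (-1) ^+ j.+1 * (j%:R)^-1 *
         \sum_(S : {set 'I_m} | (i \notin S) && (#|S| == j.-1)%N) \prod_(z in S) p z.
Proof.
set G := fun S : {set 'I_m} => \prod_(k in S) p k * ((-1) ^+ #|S| / (#|S|.+1)%:R).
have hm : (0 < m)%N := leq_ltn_trans (leq0n i) (ltn_ord i).
have step1 : \sum_(S : {set 'I_m} | i \notin S) G S =
    \sum_(k < m) \sum_(S : {set 'I_m} | (i \notin S) && (#|S| == k)) G S.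
  rewrite [RHS](exchange_big_dep (fun S : {set 'I_m} => i \notin S)) /=; last by move=> k S _ /andP[].
  apply: eq_bigr => S iS.
  have lt : (#|S| < m)%N.
    have := subset_leq_card (A := S) (B := ~: [set i]); rewrite subC1 iS => /(_ isT).
    rewrite cardsC1 card_ord => h; apply: leq_ltn_trans h _; by rewrite prednK.
  rewrite (big_pred1 (Ordinal lt)) // => k /=; rewrite iS /=.
  by rewrite -val_eqE /= eq_sym.
rewrite step1.
rewrite -(big_mkord xpredT (fun k : nat => \sum_(S : {set 'I_m} | (i \notin S) && (#|S| == k)) G S)) big_ltn //; congr (_ + _).
  rewrite (big_pred1 finset.set0); last first.
    move=> S /=; rewrite cards_eq0; case: eqP => [->|]; by rewrite ?inE ?andbF ?andbT.
  by rewrite /G big_set0 cards0 expr0 mul1r invr1 mulr1.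
rewrite [RHS]big_add1 /=; apply: eq_bigr => k _.
rewrite mulr_sumr; apply: eq_bigr => S /andP[_ /eqP hS].
by rewrite /G hS !exprS !mulN1r opprK mulrC.
Qed.


Definition q0 := active_prob p finset.set0.
Definition bb := \sum_(A : {set 'I_m}) active_prob p A *: avg A.
Definition rr := q0 + cc * (1 - q0).
Definition LL := (1 - q0)^-1 *: bb.

Lemma Estep x : \sum_(A : {set 'I_m}) active_prob p A *: fedavg_step u eta s A x =
  rr *: x + (1 - cc) *: bb.
Proof.
have hs := sum_active; rewrite (bigD1 finset.set0) //= in hs.
rewrite (bigD1 finset.set0) //= {1}/fedavg_step eqxx.
have a0 : avg finset.set0 = 0 by rewrite /avg big_set0 scaler0.
rewrite /bb [X in _ = _ + _ *: X](bigD1 finset.set0) //= a0 scaler0 add0r.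
under eq_bigr => A hA do rewrite stepE // scalerDr.
rewrite big_split /=.
have -> : \sum_(A | A != finset.set0) active_prob p A *: (cc *: x) =
          (1 - q0) *: (cc *: x).
  by rewrite -scaler_suml /q0 -hs addrC addrK.
have -> : \sum_(A | A != finset.set0) active_prob p A *: ((1 - cc) *: avg A) =
    (1 - cc) *: \sum_(A | A != finset.set0) active_prob p A *: avg A.
  by rewrite scaler_sumr; apply: eq_bigr => A _; rewrite !scalerA [_ * (1 - cc)]mulrC.
apply/rowP => k; rewrite /rr /q0 !mxE; ring.
Qed.

Lemma sum_aff (f : {set 'I_m} -> 'rV[R]_d) a v :
  \sum_(A : {set 'I_m}) active_prob p A *: (a *: f A + v) =
  a *: (\sum_(A : {set 'I_m}) active_prob p A *: f A) + v.
Proof.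
rewrite scaler_sumr -[v in RHS]scale1r -sum_active scaler_suml -big_split.
by apply: eq_bigr => A _; rewrite scalerDr !scalerA mulrC.
Qed.

Lemma Eclosed (hq : 1 - q0 != 0) T x :
  expected_iterate u eta s p x T = rr ^+ T *: x + (1 - rr ^+ T) *: LL.
Proof.
elim: T x => [|T IH] x.
  by rewrite E_0 expr0 scale1r subrr scale0r addr0.
rewrite E_rec; under eq_bigr do rewrite IH.
rewrite sum_aff Estep exprS.
set rT := rr ^+ T.
apply/rowP => k; rewrite /LL !mxE /rr.
by field.
Qed.

End Fed.
Local Open Scope classical_set_scope.

Theorem proposition1 (R : realType) (m d : nat) (u : 'I_m -> 'rV[R]_d)
  (eta : R) (s : nat) (p : 'I_m -> R)
  (hm : (0 < m)%N) (heta0 : 0 < eta) (heta1 : eta < 1) (hs : (1 <= s)%N)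
  (hp0 : forall i, 0 < p i) (hp1 : forall i, p i <= 1) :
  (fun T : nat => expected_iterate u eta s p 0 T) @ \oo --> fedavg_limit u p.
Proof.
have hq0 : q0 R m p = \prod_(l < m) (1 - p l).
  rewrite /q0 /active_prob big_set0 mul1r finset.setC0.
  by apply: eq_bigl => l; rewrite inE.
have q0ge : (0 <= q0 R m p)%R.
  by rewrite hq0; apply: prodr_ge0 => l _; rewrite subr_ge0.
have q0lt : (q0 R m p < 1)%R.
  rewrite hq0 (bigD1 (Ordinal hm)) //=.
  have h1 : (0 <= \prod_(l | l != Ordinal hm) (1 - p l))%R.
    by apply: prodr_ge0 => l _; rewrite subr_ge0.
  have h2 : (\prod_(l | l != Ordinal hm) (1 - p l) <= 1)%R.
    by apply: prodr_ile1 => l _; rewrite subr_ge0 hp1 /= lerBlDr lerDl ltW.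
  have h3 := hp0 (Ordinal hm); have h4 := hp1 (Ordinal hm).
  nra.
have ccge : (0 <= cc R eta s)%R by rewrite /cc exprn_ge0 // subr_ge0 ltW.
have cclt : (cc R eta s < 1)%R.
  by rewrite /cc exprn_ilt1 ?subr_ge0 ?ltW // -?lt0n ?gtrDl ?oppr_lt0 //; case: s hs.
have hq : (1 - q0 R m p != 0)%R by rewrite subr_eq0 eq_sym lt_eqF.
have rge : (0 <= rr R m eta s p)%R by rewrite /rr; nra.
have rlt : (rr R m eta s p < 1)%R by rewrite /rr; nra.
have -> : fedavg_limit u p = LL R m d u p.
  rewrite /LL /bb /avg /fedavg_limit.
  apply/esym; under eq_bigr do rewrite scalerA scaler_sumr.
  rewrite (exchange_big_dep xpredT) //= scaler_sumr; apply: eq_bigr => i _.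
  rewrite -scaler_suml scalerA; congr (_ *: _).
  rewrite coef_LS regroup -hq0 mulrC.
  congr (_ * _); apply: eq_bigr => A _; by rewrite mulrC.
have -> : (fun T : nat => expected_iterate u eta s p 0 T) =
          (fun T => (1 - rr R m eta s p ^+ T) *: LL R m d u p).
  by apply: funext => T; rewrite Eclosed // scaler0 add0r.
have H : (fun T => (1 - rr R m eta s p ^+ T) *: LL R m d u p) @ \oo --> (1 - 0) *: LL R m d u p.
  apply: cvgZ; last exact: cvg_cst.
  apply: cvgB; first exact: cvg_cst.
  by apply: cvg_expr; rewrite ger0_norm.
by rewrite subr0 scale1r in H.
Qed.
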